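(* Let $1\le p<\infty$, $N\ge2$, and for $1\le i\le N$ let $T_i=T_{f_i,\omega^{(i)}}$ be unilateral pseudo-shifts on $\ell^p(\mathbb{N})$ with maps $f_i$ and weights $\omega^{(i)}=(w^{(i)}_{f_i(m)})_m$, and $W^{(i)}_{m,n}=\prod_{\nu=1}^nw^{(i)}_{f_i^\nu(m)}$. Let $n,M\in\mathbb{N}$ and let $x_i=\sum_{m=1}^Ma^{(i)}_me_m$ ($1\le i\le N$) with $a^{(i)}_1,\dots,a^{(i)}_M\neq0$, and put $\Gamma=\max\{\|x_i\|:1\le i\le N\}$. Then there exists $z\in\operatorname{span}\{e_m:m\in\mathbb{N}\}$ such that $\|z\|\le MN\Gamma\max\{|W^{(\ell)}_{m,n}|^{-1}:1\le\ell\le N,\,1\le m\le M\}$, $\|T_1^nz-x_1\|\le MN\Gamma\max\left\{\left|\frac{W^{(1)}_{f_1^{-n}(j),n}}{W^{(\ell)}_{f_\ell^{-n}(j),n}}\right|:2\le\ell\le N,\ j\in f_\ell^n([M])\cap f_1^n(\mathbb{N}\setminus[M])\right\}$, and for each $2\le i\le N$, $\|T_i^nz-x_i\|\le MN\Gamma\max\left\{\left|\frac{W^{(i)}_{f_i^{-n}(j),n}}{W^{(\ell)}_{f_\ell^{-n}(j),n}}-\frac{a^{(i)}_{f_i^{-n}(j)}}{a^{(\ell)}_{f_\ell^{-n}(j)}}\right|:1\le\ell\le i-1,\ j\in f_\ell^n([M])\cap f_i^n([M])\right\}+MN\Gamma\max\left\{\left|\frac{W^{(i)}_{f_i^{-n}(j),n}}{W^{(\ell)}_{f_\ell^{-n}(j),n}}\right|:\ell\neq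 i,\ j\in f_\ell^n([M])\cap f_i^n(\mathbb{N}\setminus[M])\right\}$.
   Context: $\mathbb{N}=\{1,2,\dots\}$; $\{e_m\}$ is the canonical basis of $\ell^p(\mathbb{N})$ over $\mathbb{K}\in\{\mathbb{R},\mathbb{C}\}$. For a strictly increasing $f:\mathbb{N}\to\mathbb{N}$ with $f(1)>1$ and a bounded, nonzero sequence of scalars $\omega=(w_{f(m)})_{m\in\mathbb{N}}$, the unilateral pseudo-shift is $T_{f,\omega}(\sum_m\alpha_me_m)=\sum_mw_{f(m)}\alpha_{f(m)}e_m$. $[M]=\{1,\dots,M\}$, $f^n$ is the $n$-fold composition, $f(A)=\{f(m):m\in A\}$, $f^{-n}$ is the inverse of $f^n$ on $f^n(\mathbb{N})$. The maximum of an empty set is taken to be $0$. *)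

(* Defs.v *)
From HB Require Import structures.
From mathcomp Require Import all_boot all_order all_algebra.
From mathcomp Require Import all_classical all_reals all_analysis.
From mathcomp Require Import complex.
Set Implicit Arguments. Unset Strict Implicit. Unset Printing Implicit Defensive.
Import Order.TTheory GRing.Theory Num.Theory.
Local Open Scope classical_set_scope.
Local Open Scope ring_scope.

(* Conventions.
   * N = {1,2,...} is represented inside [nat]; index 0 is never used:
     vectors of l^p(N) are sequences [nat -> K] whose value at 0 is ignored
     (the l^p norm only sums over indices k >= 1).
   * Scalars: a field K together with its absolute value [nrm : K -> R]
     (R a realType); the main theorem instantiates K = R and K = R[i].
   * Maxima of (finite) sets of nonnegative reals are written as big [Num.max]
     with neutral element 0, so that the maximum of an empty set is 0. *)

Section Defs.
Variables (R : realType) (K : fieldType) (nrm : K -> R).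

Definition lp_norm (p : R) (a : nat -> K) : R :=
  (\big[+%R/0]_(1 <= k <oo) (nrm (a k) `^ p)) `^ p^-1.

(* the data of a unilateral pseudo-shift T_{f,omega} with omega = (w (f m))_m *)
Definition pseudo_shift_data (f : nat -> nat) (w : nat -> K) : Prop :=
  [/\ (forall m, (0 < m)%N -> (f m < f m.+1)%N),
      (1 < f 1)%N,
      (exists B : R, forall m, (0 < m)%N -> nrm (w (f m)) <= B) &
      (forall m, (0 < m)%N -> w (f m) != 0)].

Definition pshift (f : nat -> nat) (w : nat -> K) (a : nat -> K) : nat -> K :=
  fun m => if m == 0%N then 0 else w (f m) * a (f m).

Definition Wprod (f : nat -> nat) (w : nat -> K) (m n : nat) : K :=
  \prod_(1 <= nu < n.+1) w (iter nu f m).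

Definition in_span (z : nat -> K) : Prop :=
  z 0%N = 0 /\ exists B : nat, forall m, (B < m)%N -> z m = 0.

Definition finvec (M : nat) (a : nat -> K) : nat -> K :=
  fun m => if (1 <= m <= M)%N then a m else 0.

End Defs.

Definition in_iter_range (f : nat -> nat) (n j : nat) : bool :=
  `[< exists k, (0 < k)%N /\ iter n f k = j >].

(* f^{-n}(j), the inverse of f^n on f^n(N) (junk value 0 outside f^n(N)) *)
Definition iter_inv (f : nat -> nat) (n j : nat) : nat :=
  xget 0%N [set k | (0 < k)%N /\ iter n f k = j].

Definition in_img_le (f : nat -> nat) (n M j : nat) : bool :=
  in_iter_range f n j && (iter_inv f n j <= M)%N.

Definition in_img_gt (f : nat -> nat) (n M j : nat) : bool :=
  in_iter_range f n j && (M < iter_inv f n j)%N.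

Section Statement.
Variables (R : realType) (K : fieldType) (nrm : K -> R).

(* max { F l j : 1 <= l <= N, lcond l, j \in f_l^n([M]), jcond l j }, 0 if empty;
   j ranges over f_l^n([M]) = { f_l^n(m) : 1 <= m <= M } *)
Definition maxover (N M n : nat) (f : nat -> nat -> nat) (lcond : pred nat)
  (jcond : nat -> nat -> bool) (F : nat -> nat -> R) : R :=
  \big[Num.max/0]_(1 <= l < N.+1 | lcond l)
    \big[Num.max/0]_(1 <= m < M.+1 | jcond l (iter n (f l) m))
       F l (iter n (f l) m).

Definition lemma2p5_prop : Prop :=
  forall (p : R) (N : nat) (f : nat -> nat -> nat) (w : nat -> nat -> K)
         (n M : nat) (a : nat -> nat -> K),
  1 <= p -> (2 <= N)%N -> (1 <= n)%N -> (1 <= M)%N ->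
  (forall i, (1 <= i <= N)%N -> pseudo_shift_data nrm (f i) (w i)) ->
  (forall i m, (1 <= i <= N)%N -> (1 <= m <= M)%N -> a i m != 0) ->
  let T i := pshift (f i) (w i) in
  let W i m := Wprod (f i) (w i) m n in
  let x i := finvec M (a i) in
  let Gamma := \big[Num.max/0]_(1 <= i < N.+1) lp_norm nrm p (x i) in
  let C := M%:R * N%:R * Gamma in
  let ratio i l j := nrm (W i (iter_inv (f i) n j) / W l (iter_inv (f l) n j)) in
  exists z : nat -> K,
    [/\ in_span z,
        lp_norm nrm p z <=
          C * \big[Num.max/0]_(1 <= l < N.+1)
                \big[Num.max/0]_(1 <= m < M.+1) (nrm (W l m))^-1,
        lp_norm nrm p (fun k => iter n (T 1%N) z k - x 1%N k) <=
          C * maxover N M n f (fun l => (2 <= l)%N)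
                (fun l j => in_img_gt (f 1%N) n M j) (fun l j => ratio 1%N l j) &
        forall i, (2 <= i <= N)%N ->
          lp_norm nrm p (fun k => iter n (T i) z k - x i k) <=
            C * maxover N M n f (fun l => (l <= i.-1)%N)
                  (fun l j => in_img_le (f i) n M j)
                  (fun l j => nrm (W i (iter_inv (f i) n j) / W l (iter_inv (f l) n j)
                                   - a i (iter_inv (f i) n j) / a l (iter_inv (f l) n j)))
          + C * maxover N M n f (fun l => l != i)
                  (fun l j => in_img_gt (f i) n M j) (fun l j => ratio i l j)].

End Statement.

(* Main.v *)
Require Import Defs.
From HB Require Import structures.
From mathcomp Require Import all_boot all_order all_algebra.
From mathcomp Require Import all_classical all_reals all_analysis.
From mathcomp Require Import complex.
From mathcomp Require Import ring.
Import Order.TTheory GRing.Theory Num.Theory.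
Local Open Scope ring_scope.

Section An.
Variable R : realType.

Lemma series_fin (F : nat -> R) B : (forall k, (B < k)%N -> F k = 0) ->
  limn (fun n => \sum_(1 <= k < n) F k) = \sum_(1 <= k < B.+1) F k.
Proof.
move=> HF; apply: lim_near_cst; first exact: Rhausdorff. exists B.+1 => // n /= Hn.
rewrite (@big_cat_nat _ _ _ B.+1 1 n) //= [X in _ + X]big1_seq ?addr0 //.
move=> k /andP[_]; rewrite mem_index_iota => /andP[Hk _]; exact: HF.
Qed.

Lemma powR_split (p x : R) : 1 <= p -> 0 <= x -> x `^ p = x * x `^ (p - 1).
Proof.
move=> p1 x0; have p0 : p != 0 by apply: lt0r_neq0; apply: lt_le_trans p1.
rewrite -{2}(powRr1 x0) -powRD; first by rewrite addrC subrK.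
by rewrite addrC subrK (negbTE p0).
Qed.

Lemma sum_pow_le (p : R) (r : seq nat) (F : nat -> R) : 1 <= p ->
  uniq r -> (forall k, 0 <= F k) ->
  \sum_(k <- r) F k `^ p <= (\sum_(k <- r) F k) `^ p.
Proof.
move=> p1 ur F0; set s := \sum_(k <- r) F k.
have s0 : 0 <= s by apply: sumr_ge0.
have Hk : forall k, k \in r -> F k `^ p <= F k * s `^ (p - 1).
  move=> k kr; rewrite powR_split //.
  apply: ler_wpM2l => //; apply: ge0_ler_powR; rewrite ?subr_ge0 ?nnegrE //.
  rewrite /s (bigD1_seq k) //=.
  by rewrite lerDl; apply: sumr_ge0.
apply: (@le_trans _ _ (\sum_(k <- r) F k * s `^ (p - 1))).
  by rewrite big_seq [X in _ <= X]big_seq; apply: ler_sum => k kr; apply: Hk.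
by rewrite -mulr_suml -/s -powR_split.
Qed.

Section Nrm.
Variables (K : fieldType) (nrm : K -> R).
Hypothesis nrm0 : nrm 0 = 0.
Hypothesis nrm_ge0 : forall x, 0 <= nrm x.

Lemma lp_le_l1 (p : R) (v : nat -> K) B : 1 <= p ->
  (forall k, (B < k)%N -> v k = 0) ->
  lp_norm nrm p v <= \sum_(1 <= k < B.+1) nrm (v k).
Proof.
move=> p1 Hv; have p0 : p != 0 by apply: lt0r_neq0; apply: lt_le_trans p1.
rewrite /lp_norm (@series_fin _ B); last by move=> k /Hv ->; rewrite nrm0 powR0.
apply: (@le_trans _ _ (((\sum_(1 <= k < B.+1) nrm (v k)) `^ p) `^ p^-1)).
  apply: ge0_ler_powR.
  - by rewrite invr_ge0; apply: le_trans p1.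
  - by rewrite nnegrE sumr_ge0 // => i _; rewrite powR_ge0.
  - by rewrite nnegrE powR_ge0.
  - exact: (@sum_pow_le p (index_iota 1 B.+1) (fun k => nrm (v k)) p1 (iota_uniq _ _) (fun k => nrm_ge0 _)).
by rewrite -powRrM mulfV // powRr1 // sumr_ge0.
Qed.

Lemma term_le_lp (p : R) (v : nat -> K) B k : 1 <= p ->
  (forall k, (B < k)%N -> v k = 0) -> (0 < k)%N ->
  nrm (v k) <= lp_norm nrm p v.
Proof.
move=> p1 Hv k0; have p0 : p != 0 by apply: lt0r_neq0; apply: lt_le_trans p1.
have [kB|kB] := leqP k B; last by rewrite Hv // nrm0 powR_ge0.
rewrite /lp_norm (@series_fin _ B); last by move=> j /Hv ->; rewrite nrm0 powR0.
rewrite -{1}(powRr1 (nrm_ge0 (v k))) -(mulfV p0) powRrM.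
apply: ge0_ler_powR.
- by rewrite invr_ge0; apply: le_trans p1.
- by rewrite nnegrE powR_ge0.
- by rewrite nnegrE sumr_ge0 // => i _; rewrite powR_ge0.
rewrite (bigD1_seq k) //= ?iota_uniq ?mem_index_iota ?k0 //.
by rewrite lerDl sumr_ge0 // => i _; rewrite powR_ge0.
Qed.

Lemma sum_eq_le1 (g : nat -> nat) c (s : seq nat) :
  uniq (map g s) -> (\sum_(m <- s) (c == g m) <= 1)%N.
Proof.
elim: s => [|x s IH]; first by rewrite big_nil.
rewrite /= big_cons => /andP[nx us].
case: eqP => [->|_]; last by rewrite add0n IH.
rewrite big1_seq ?addn0 // => y /andP[_ ys]; case: eqP => // E.
by move: nx; rewrite E map_f.
Qed.

Lemma count_bound (v : nat -> K) (g : nat -> nat) (h : nat -> nat -> nat) N M B (b : R) :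
  0 <= b -> (forall m m', (0 < m)%N -> (0 < m')%N -> g m = g m' -> m = m') ->
  (forall m, (0 < m)%N -> (m <= B)%N -> v m = 0 \/
     (nrm (v m) <= b /\ exists l k, [/\ (1 <= l <= N)%N, (1 <= k <= M)%N & h l k = g m])) ->
  \sum_(1 <= m < B.+1) nrm (v m) <= b * (N * M)%:R.
Proof.
move=> b0 ginj Hv.
pose c m := (\sum_(1 <= l < N.+1) \sum_(1 <= k < M.+1) (h l k == g m))%N.
apply: (@le_trans _ _ (\sum_(1 <= m < B.+1) b * (c m)%:R)).
  rewrite big_seq [X in _ <= X]big_seq; apply: ler_sum => m.
  rewrite mem_index_iota => /andP[m0 mB].
  case: (Hv m m0 mB) => [->|[Hb [l [k [lN kM E]]]]].
    by rewrite nrm0 mulr_ge0 ?ler0n.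
  apply: (le_trans Hb); rewrite -{1}(mulr1 b); apply: ler_wpM2l => //; rewrite ler1n.
  case/andP: lN => l1 lN; case/andP: kM => k1 kM.
  rewrite /c (bigD1_seq l) ?mem_index_iota ?l1 ?ltnS ?lN ?iota_uniq //=.
  rewrite (bigD1_seq k) ?mem_index_iota ?k1 ?ltnS ?kM ?iota_uniq //= E eqxx.
  by rewrite -addnA add1n.
rewrite -mulr_sumr -natr_sum; apply: ler_wpM2l => //; rewrite ler_nat /c.
rewrite exchange_big /=.
under eq_bigr => l _ do rewrite exchange_big /=.
apply: (@leq_trans (\sum_(1 <= l < N.+1) \sum_(1 <= k < M.+1) 1)%N).
  apply: leq_sum => l _; apply: leq_sum => k _; apply: sum_eq_le1.
  rewrite map_inj_in_uniq ?iota_uniq // => m m'.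
  rewrite !mem_index_iota => /andP[m0 _] /andP[m0' _]; exact: ginj.
by rewrite !sum_nat_const_nat !subSS !subn0 muln1.
Qed.

Lemma iter_pshift (f : nat -> nat) (w : nat -> K) z k m :
  (forall m, (0 < m)%N -> (0 < f m)%N) -> (0 < m)%N ->
  iter k (pshift f w) z m = Wprod f w m k * z (iter k f m).
Proof.
move=> fpos; elim: k m => [|k IH] m m0.
  by rewrite /Wprod big_geq // mul1r.
rewrite iterS {1}/pshift (negbTE (lt0n_neq0 m0)) IH ?fpos //.
rewrite /Wprod (@big_nat_recl _ _ _ k.+1 1) // iterSr mulrA; congr (_ * _ * _).
  by apply: eq_bigr => i _; rewrite iterSr.
by rewrite iterSr.
Qed.
End Nrm.

Lemma bigmax_ge0 (r : seq nat) (P : pred nat) (F : nat -> R) :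
  0 <= \big[Num.max/0]_(j <- r | P j) F j.
Proof.
elim: r => [|x r IH]; rewrite ?big_nil // big_cons; case: (P x) => //.
by rewrite le_max IH orbT.
Qed.

Lemma le_bigmax_r (r : seq nat) (P : pred nat) (F : nat -> R) i :
  i \in r -> P i -> F i <= \big[Num.max/0]_(j <- r | P j) F j.
Proof.
elim: r => [|x r IH] //; rewrite in_cons big_cons => /orP[/eqP<-|ir] Pi.
  by rewrite Pi le_max lexx.
case: (P x); last exact: IH.
by rewrite le_max IH ?orbT.
Qed.
End An.

Section Fn.
Variable f : nat -> nat.
Hypothesis hf : forall m, (0 < m)%N -> (f m < f m.+1)%N.
Hypothesis hf1 : (1 < f 1)%N.

Lemma f_gt m : (0 < m)%N -> (m < f m)%N.
Proof.
elim: m => // m IH _; case: m IH => [_|m IH]; first exact: hf1.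
by apply: leq_ltn_trans (hf _ _); [apply: IH|].
Qed.

Lemma f_mono m m' : (0 < m)%N -> (m < m')%N -> (f m < f m')%N.
Proof.
move=> m0; elim: m' => // m' IH; rewrite ltnS leq_eqVlt => /orP[/eqP<-|lt].
  exact: hf.
by apply: ltn_trans (IH lt) (hf _ _); apply: leq_ltn_trans lt.
Qed.

Lemma iter_ge n m : (0 < m)%N -> (m <= iter n f m)%N.
Proof.
move=> m0; elim: n => //= n IH.
have h : (0 < iter n f m)%N by exact: (@leq_trans m _ _ m0 IH).
by apply: leq_trans (ltnW (f_gt _ h)).
Qed.

Lemma iter_pos n m : (0 < m)%N -> (0 < iter n f m)%N.
Proof. by move=> m0; apply: leq_trans (iter_ge n _ m0). Qed.

Lemma iter_mono n m m' : (0 < m)%N -> (m < m')%N -> (iter n f m < iter n f m')%N.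
Proof.
move=> m0 mm; elim: n => //= n IH; apply: f_mono => //; exact: iter_pos.
Qed.

Lemma iter_inj n m m' : (0 < m)%N -> (0 < m')%N -> iter n f m = iter n f m' -> m = m'.
Proof.
move=> m0 m0' E; case: (ltngtP m m') => // lt.
  by have := iter_mono n _ _ m0 lt; rewrite E ltnn.
by have := iter_mono n _ _ m0' lt; rewrite E ltnn.
Qed.

Lemma iter_invE n m : (0 < m)%N -> iter_inv f n (iter n f m) = m.
Proof.
move=> m0; apply: xget_unique => //= y [y0 E]; exact: iter_inj E.
Qed.

Lemma in_rangeE n m : (0 < m)%N -> in_iter_range f n (iter n f m).
Proof. by move=> m0; apply/asboolP; exists m. Qed.

Lemma in_img_leE n M m : (0 < m)%N -> in_img_le f n M (iter n f m) = (m <= M)%N.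
Proof. by move=> m0; rewrite /in_img_le in_rangeE // iter_invE. Qed.

Lemma in_img_gtE n M m : (0 < m)%N -> in_img_gt f n M (iter n f m) = (M < m)%N.
Proof. by move=> m0; rewrite /in_img_gt in_rangeE // iter_invE. Qed.

Lemma in_img_leP n M j : in_img_le f n M j ->
  exists k, [/\ (0 < k)%N, (k <= M)%N & iter n f k = j].
Proof.
case/andP=> /asboolP [k [k0 E]]; rewrite -E iter_invE // => kM.
by exists k.
Qed.
End Fn.

Module C.
Set Implicit Arguments. Unset Strict Implicit.
Section Main.
Variables (R : realType) (K : fieldType) (nrm : K -> R).
Hypothesis nrm0 : nrm 0 = 0.
Hypothesis nrm_ge0 : forall x, 0 <= nrm x.
Hypothesis nrmM : forall x y, nrm (x * y) = nrm x * nrm y.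
Hypothesis nrmV : forall x, nrm x^-1 = (nrm x)^-1.

Variables (p : R) (N : nat) (f : nat -> nat -> nat) (w : nat -> nat -> K)
  (n M : nat) (a : nat -> nat -> K).
Hypothesis p1 : 1 <= p.
Hypothesis hps : forall i, (1 <= i <= N)%N -> pseudo_shift_data nrm (f i) (w i).
Hypothesis ha0 : forall i m, (1 <= i <= N)%N -> (1 <= m <= M)%N -> a i m != 0.

Definition Wl i m := Wprod (f i) (w i) m n.
Definition xv i := finvec M (a i).
Definition Gam := \big[Num.max/0]_(1 <= i < N.+1) lp_norm nrm p (xv i).

Lemma hfi i : (1 <= i <= N)%N -> forall m, (0 < m)%N -> (f i m < f i m.+1)%N.
Proof. by move=> /hps []. Qed.
Lemma hf1i i : (1 <= i <= N)%N -> (1 < f i 1)%N.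
Proof. by move=> /hps []. Qed.
Lemma hwi i : (1 <= i <= N)%N -> forall m, (0 < m)%N -> w i (f i m) != 0.
Proof. by move=> /hps []. Qed.
Arguments hfi {i}. Arguments hf1i {i}. Arguments hwi {i}.
Lemma fpos i : (1 <= i <= N)%N -> forall m, (0 < m)%N -> (0 < f i m)%N.
Proof.
move=> iN m m0; have := @f_gt _ (hfi iN) (hf1i iN) _ m0.
by apply: leq_trans.
Qed.

Lemma iinvE i m : (1 <= i <= N)%N -> (0 < m)%N -> iter_inv (f i) n (iter n (f i) m) = m.
Proof. by move=> iN m0; apply: (@iter_invE _ (hfi iN) (hf1i iN)). Qed.
Lemma iinj i m m' : (1 <= i <= N)%N -> (0 < m)%N -> (0 < m')%N ->
  iter n (f i) m = iter n (f i) m' -> m = m'.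
Proof. by move=> iN; apply: (@iter_inj _ (hfi iN) (hf1i iN)). Qed.
Lemma ige i m : (1 <= i <= N)%N -> (0 < m)%N -> (m <= iter n (f i) m)%N.
Proof. by move=> iN; apply: (@iter_ge _ (hfi iN) (hf1i iN)). Qed.
Lemma leE i m : (1 <= i <= N)%N -> (0 < m)%N -> in_img_le (f i) n M (iter n (f i) m) = (m <= M)%N.
Proof. by move=> iN; apply: (@in_img_leE _ (hfi iN) (hf1i iN)). Qed.
Lemma gtE i m : (1 <= i <= N)%N -> (0 < m)%N -> in_img_gt (f i) n M (iter n (f i) m) = (M < m)%N.
Proof. by move=> iN; apply: (@in_img_gtE _ (hfi iN) (hf1i iN)). Qed.
Lemma leP i j : (1 <= i <= N)%N -> in_img_le (f i) n M j ->
  exists k, [/\ (0 < k)%N, (k <= M)%N & iter n (f i) k = j].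
Proof. by move=> iN; apply: (@in_img_leP _ (hfi iN) (hf1i iN)). Qed.

Lemma Wne0 i m : (1 <= i <= N)%N -> (0 < m)%N -> Wl i m != 0.
Proof.
move=> iN m0; rewrite /Wl /Wprod prodf_seq_neq0; apply/allP => nu.
rewrite mem_index_iota => /andP[nu1 _]; apply/implyP => _.
case: nu nu1 => // nu _; rewrite iterS; apply: hwi => //.
exact: (@iter_pos _ (hfi iN) (hf1i iN)).
Qed.

Lemma Gam_ge0 : 0 <= Gam.
Proof. exact: bigmax_ge0. Qed.

Lemma nrm_a_le i k : (1 <= i <= N)%N -> (1 <= k <= M)%N -> nrm (a i k) <= Gam.
Proof.
move=> iN kM.
have supp : forall k, (M < k)%N -> xv i k = 0.
  by move=> j Mj; rewrite /xv /finvec (leqNgt j M) Mj andbF.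
have := @term_le_lp _ _ _ nrm0 nrm_ge0 p (xv i) M k p1 supp; rewrite /xv /finvec kM.
case/andP: kM => k1 _ => /(_ k1) H; apply: le_trans H _.
apply: (@le_bigmax_r _ _ xpredT (fun i => lp_norm nrm p (xv i)) i) => //.
by rewrite mem_index_iota ltnS.
Qed.

Definition Pl j l := in_img_le (f l) n M j.
Definition hasl j := has (Pl j) (iota 1 N).
Definition sel j := (find (Pl j) (iota 1 N)).+1.
Definition zz j := if (j != 0%N) && hasl j then
   a (sel j) (iter_inv (f (sel j)) n j) / Wl (sel j) (iter_inv (f (sel j)) n j) else 0.

Lemma sel_spec j : hasl j -> [/\ (1 <= sel j)%N, (sel j <= N)%N & Pl j (sel j)].
Proof.
move=> h; have := h; rewrite /hasl has_find size_iota => lt.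
have := nth_find 0%N h; rewrite nth_iota // add1n => Ps.
Qed.

Lemma sel_min j i : (1 <= i <= N)%N -> Pl j i -> (sel j <= i)%N.
Proof.
move=> /andP[i1 iN] Pi; rewrite /sel ltnNge; apply/negP => H.
have H' : (i.-1 < find (Pl j) (iota 1 N))%N by case: i i1 iN Pi H.
have := before_find 0%N H'; rewrite nth_iota; last by case: i i1 iN Pi H H'.
by rewrite add1n prednK // Pi.
Qed.

Lemma hasl_intro j i : (1 <= i <= N)%N -> Pl j i -> hasl j.
Proof.
move=> /andP[i1 iN] Pi; apply/hasP; exists i => //.
by rewrite mem_iota i1 add1n ltnS.
Qed.

Definition Bz := (\max_(1 <= l < N.+1) \max_(1 <= k < M.+1) iter n (f l) k)%N.

Lemma sel_N j : hasl j -> (1 <= sel j <= N)%N.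
Proof. by case/sel_spec => -> ->. Qed.

Lemma zz_spec j : (0 < j)%N -> hasl j -> exists k,
  [/\ (0 < k)%N, (k <= M)%N, iter n (f (sel j)) k = j &
      zz j = a (sel j) k / Wl (sel j) k].
Proof.
move=> j0 hj; have [_ _ Pj] := sel_spec hj.
have [k [k0 kM E]] := leP (sel_N hj) Pj.
exists k; split => //.
have Ik : iter_inv (f (sel j)) n j = k.
  have H : forall l, (1 <= l <= N)%N -> iter n (f l) k = j -> iter_inv (f l) n j = k.
    by move=> l lN <-; rewrite iinvE.
  exact: H (sel_N hj) E.
by rewrite /zz (lt0n_neq0 j0) hj /= Ik.
Qed.

Lemma zz_supp j : (Bz < j)%N -> zz j = 0.
Proof.
move=> Bj; case hj: (hasl j); last by rewrite /zz hj andbF.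
have j0 : (0 < j)%N by apply: leq_ltn_trans Bj.
have [k [k0 kM E _]] := zz_spec j0 hj.
suff : (j <= Bz)%N by rewrite leqNgt Bj.
rewrite -E /Bz; have slN := sel_N hj.
apply: (@leq_trans (\max_(1 <= k < M.+1) iter n (f (sel j)) k)).
  by apply: leq_bigmax_seq => //; rewrite mem_index_iota k0 ltnS.
apply: (@leq_bigmax_seq _ _ xpredT (fun l => \max_(1 <= k < M.+1) iter n (f l) k) (sel j)) => //.
by rewrite mem_index_iota ltnS.
Qed.

Lemma zz0 : zz 0 = 0.
Proof. by rewrite /zz eqxx. Qed.

Lemma z_span : in_span zz.
Proof. split; first exact: zz0. by exists Bz => m; apply: zz_supp. Qed.

Lemma z_norm : lp_norm nrm p zz <= (M%:R * N%:R * Gam) *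
  \big[Num.max/0]_(1 <= l < N.+1) \big[Num.max/0]_(1 <= m < M.+1) (nrm (Wl l m))^-1.
Proof.
set mW := \big[Num.max/0]_(1 <= l < N.+1) _.
apply: le_trans (@lp_le_l1 _ _ _ nrm0 nrm_ge0 p zz Bz p1 zz_supp) _.
have b0 : 0 <= Gam * mW by rewrite mulr_ge0 ?Gam_ge0 ?bigmax_ge0.
apply: le_trans (@count_bound _ _ _ nrm0 zz id (fun l k => iter n (f l) k) N M Bz _ b0 _ _) _.
- by move=> m m' _ _.
- move=> j j0 _; case hj: (hasl j); last by left; rewrite /zz hj andbF.
  right; have [k [k0 kM E zE]] := zz_spec j0 hj; have slN := sel_N hj.
  split; last by exists (sel j), k; rewrite slN k0 kM.
  rewrite zE nrmM nrmV; apply: ler_pM => //.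
  + by rewrite invr_ge0.
  + by apply: nrm_a_le => //; rewrite k0.
  apply: (@le_trans _ _ (\big[Num.max/0]_(1 <= m < M.+1) (nrm (Wl (sel j) m))^-1)).
    by apply: (@le_bigmax_r _ _ xpredT (fun m => (nrm (Wl (sel j) m))^-1) k) => //; rewrite mem_index_iota k0 ltnS.
  apply: (@le_bigmax_r _ _ xpredT (fun l => \big[Num.max/0]_(1 <= m < M.+1) (nrm (Wl l m))^-1) (sel j)) => //.
  by rewrite mem_index_iota ltnS; case/andP: slN.
- by rewrite natrM le_eqVlt; apply/orP; left; apply/eqP; ring.
Qed.

Lemma T_bound i (Aval Bval : R) : (1 <= i <= N)%N -> 0 <= Aval -> 0 <= Bval ->
  (forall l m k, (1 <= l)%N -> (l < i)%N -> (0 < m)%N -> (m <= M)%N ->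
     (0 < k)%N -> (k <= M)%N -> iter n (f l) k = iter n (f i) m ->
     nrm (Wl i m / Wl l k - a i m / a l k) <= Aval) ->
  (forall l m k, (1 <= l <= N)%N -> l != i -> (0 < k)%N -> (k <= M)%N -> (M < m)%N ->
     iter n (f l) k = iter n (f i) m -> nrm (Wl i m / Wl l k) <= Bval) ->
  lp_norm nrm p (fun k => iter n (pshift (f i) (w i)) zz k - xv i k) <=
    (M%:R * N%:R * Gam) * Aval + (M%:R * N%:R * Gam) * Bval.
Proof.
move=> iN A0 B0 hA hB.
set v := fun k => _.
have vE : forall m, (0 < m)%N -> v m = Wl i m * zz (iter n (f i) m) - xv i m.
  by move=> m m0; rewrite /v iter_pshift //; apply: fpos.
have supp : forall k, (Bz + M < k)%N -> v k = 0.
  move=> k Hk; have k0 : (0 < k)%N by apply: leq_ltn_trans Hk.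
  rewrite vE // zz_supp; last first.
    apply: (@leq_trans k); last exact: ige.
    by apply: leq_ltn_trans Hk; apply: leq_addr.
  have Mk : (M < k)%N by apply: leq_ltn_trans Hk; apply: leq_addl.
  by rewrite /xv /finvec (leqNgt k M) Mk andbF mulr0 subr0.
apply: le_trans (@lp_le_l1 _ _ _ nrm0 nrm_ge0 p v (Bz + M) p1 supp) _.
have b0 : 0 <= Gam * (Aval + Bval) by rewrite mulr_ge0 ?Gam_ge0 ?addr_ge0.
apply: le_trans (@count_bound _ _ _ nrm0 v (iter n (f i)) (fun l k => iter n (f l) k) N M (Bz + M) _ b0 _ _) _.
- by move=> m m' m0 m0'; apply: iinj.
- move=> m m0 _; set j := iter n (f i) m.
  have j0 : (0 < j)%N by apply: (leq_trans m0); apply: ige.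
  case: (leqP m M) => mM.
  + right; split; last by exists i, m; rewrite iN m0 mM.
    have Pi : Pl j i by rewrite /Pl leE.
    have hj : hasl j := hasl_intro iN Pi.
    have sli := sel_min iN Pi.
    have [k [k0 kM E zE]] := zz_spec j0 hj.
    have xE : xv i m = a i m by rewrite /xv /finvec m0 mM.
    rewrite vE // xE zE.
    case: (ltngtP (sel j) i) => [lt | gt | el].
    * have slN := sel_N hj.
      have ak0 : a (sel j) k != 0 by apply: ha0 => //; rewrite k0.
      have -> : Wl i m * (a (sel j) k / Wl (sel j) k) - a i m =
          a (sel j) k * (Wl i m / Wl (sel j) k - a i m / a (sel j) k).
        by rewrite mulrBr [a (sel j) k * (a i m / _)]mulrC divfK // mulrCA.
      rewrite nrmM; apply: (@le_trans _ _ (Gam * Aval)).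
        apply: ler_pM => //; first by apply: nrm_a_le => //; rewrite k0.
        by apply: hA => //; case/andP: slN.
      by apply: ler_wpM2l; rewrite ?Gam_ge0 // lerDl.
    * by move: gt; rewrite ltnNge sli.
    * have km : k = m by apply: (@iinj i) => //; move: E; rewrite el.
      rewrite el km mulrCA divff ?Wne0 // mulr1 subrr nrm0.
      exact: b0.
  + have xE : xv i m = 0 by rewrite /xv /finvec (leqNgt m M) mM andbF.
    case hj: (hasl j); last by left; rewrite vE // xE /zz hj andbF mulr0 subr0.
    right; have [k [k0 kM E zE]] := zz_spec j0 hj; have slN := sel_N hj.
    split; last by exists (sel j), k; rewrite slN k0 kM.
    have li : sel j != i.
      apply/eqP => el; have km : k = m by apply: (@iinj i) => //; move: E; rewrite el.
      by move: mM; rewrite -km ltnNge kM.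
    rewrite vE // xE zE subr0 mulrCA nrmM.
    apply: (@le_trans _ _ (Gam * Bval)).
      apply: ler_pM => //; first by apply: nrm_a_le => //; rewrite k0.
      exact: hB.
    by apply: ler_wpM2l; rewrite ?Gam_ge0 // lerDr.
- by rewrite natrM le_eqVlt; apply/orP; left; apply/eqP; ring.
Qed.

Lemma maxover_term (lcond : pred nat) (jcond : nat -> nat -> bool) (F : nat -> nat -> R) l k :
  (1 <= l <= N)%N -> lcond l -> (1 <= k <= M)%N -> jcond l (iter n (f l) k) ->
  F l (iter n (f l) k) <= maxover N M n f lcond jcond F.
Proof.
move=> /andP[l1 lN] lc /andP[k1 kM] jc; rewrite /maxover.
apply: (@le_trans _ _ (\big[Num.max/0]_(1 <= m < M.+1 | jcond l (iter n (f l) m)) F l (iter n (f l) m))).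
  by apply: (@le_bigmax_r _ _ (fun m => jcond l (iter n (f l) m)) (fun m => F l (iter n (f l) m)) k) => //; rewrite mem_index_iota k1 ltnS.
apply: (@le_bigmax_r _ _ lcond (fun l => \big[Num.max/0]_(1 <= m < M.+1 | jcond l (iter n (f l) m)) F l (iter n (f l) m)) l) => //.
by rewrite mem_index_iota l1 ltnS.
Qed.

End Main.

End C.
Import C.

Lemma gen (R : realType) (K : fieldType) (nrm : K -> R) :
  nrm 0 = 0 -> (forall x, 0 <= nrm x) -> (forall x y, nrm (x * y) = nrm x * nrm y) ->
  (forall x, nrm x^-1 = (nrm x)^-1) -> lemma2p5_prop nrm.
Proof.
move=> h0 hge hM hV p N f w n M a p1 N2 n1 M1 hps ha0; cbv beta zeta.
exists (zz N f w n M a); split.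
- exact: (z_span n M a hps).
- exact: (z_norm h0 hge hM hV n M a p1 hps).
- have N1 : (1 <= 1 <= N)%N by rewrite /= ltnW.
  have H := T_bound h0 hge hM p1 hps ha0 (n := n) (i := 1%N) (Aval := 0) N1 (lexx 0).
  rewrite -[X in _ <= X]add0r -[X in _ <= X + _](mulr0 (M%:R * N%:R * Gam nrm p N M a)); apply: H.
  + exact: bigmax_ge0.
  + by move=> l m k l1 li; case: l l1 li.
  + move=> l m k lN l1 k0 kM Mm E.
    apply: le_trans _ (maxover_term _ (l := l) (k := k) lN _ _ _).
    * by rewrite /= (C.iinvE n hps lN k0) E (C.iinvE n hps N1 (leq_trans _ Mm)).
    * by case/andP: lN => l0 _; rewrite ltn_neqAle eq_sym l1 l0.
    * by rewrite k0 kM.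
    * by rewrite /= E (C.gtE n M hps N1 (leq_ltn_trans _ Mm)).
- move=> i /andP[i2 iN].
  have i1 : (0 < i)%N by apply: ltnW.
  have iN' : (1 <= i <= N)%N by rewrite i1 iN.
  apply: (T_bound h0 hge hM p1 hps ha0 iN'); try exact: bigmax_ge0.
  + move=> l m k l1 li m0 mM k0 kM E.
    have lN : (1 <= l <= N)%N by rewrite l1 (leq_trans (ltnW li) iN).
    apply: le_trans _ (maxover_term _ (l := l) (k := k) lN _ _ _).
    * by rewrite /= (C.iinvE n hps lN k0) E (C.iinvE n hps iN' m0).
    * by rewrite -ltnS prednK.
    * by rewrite k0 kM.
    * by rewrite /= E (C.leE n M hps iN' m0).
  + move=> l m k lN li k0 kM Mm E.
    apply: le_trans _ (maxover_term _ (l := l) (k := k) lN _ _ _).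
    * by rewrite /= (C.iinvE n hps lN k0) E (C.iinvE n hps iN' (leq_trans _ Mm)).
    * exact: li.
    * by rewrite k0 kM.
    * by rewrite /= E (C.gtE n M hps iN' (leq_ltn_trans _ Mm)).
Qed.

Theorem lemma2p5 (R : realType) :
  lemma2p5_prop (fun x : R => `|x|) /\ lemma2p5_prop (@Normc.normc R).
Proof.
split; apply: gen.
- by rewrite normr0.
- by move=> x; rewrite normr_ge0.
- exact: normrM.
- exact: normfV.
- exact: Normc.normc0.
- by case=> x y; rewrite /Normc.normc sqrtr_ge0.
- exact: Normc.normcM.
- exact: Normc.normcV.
Qed.
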